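(* Let $p\in[1,\infty]$, $d\in\mathbb N$, $m_0:=d$, $m_1\le m_2\le\cdots$ positive integers, and $\mathbf W_n\in\mathbb R^{m_n\times m_{n-1}}$ for $n\in\mathbb N$. If $\mathbf W_n=\mathbf I_{m_n,m_{n-1}}+\mathbf P_n$ with $\sum_{n=1}^\infty\|\mathbf P_n\|_p<\infty$, then $\lim_{n\to\infty}\mathbf I_{\infty,m_n}\mathbf W_n\mathbf W_{n-1}\cdots\mathbf W_1$ exists in $\mathcal B(\mathbb R^d,\ell^p)$.
   Context: $\|\cdot\|_p$ on matrices denotes the operator norm induced by the $\ell^p$ vector norms. For $m'\ge m$, $\mathbf I_{m',m}$ is the $m'\times m$ matrix with top $m\times m$ block the identity and the remaining entries zero; $\mathbf I_{\infty,m}$ is the analogous matrix with infinitely many rows (the embedding $\mathbb R^m\to\ell^p$). $\mathcal B(\mathbb R^d,\ell^p)$ is the Banach space of bounded linear operators $\mathbb R^d\to\ell^p$ with the induced operator norm. *)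

(* Defs.v *)
From HB Require Import structures.
From mathcomp Require Import all_boot all_order all_algebra.
From mathcomp Require Import all_classical all_reals all_analysis.
Set Implicit Arguments. Unset Strict Implicit. Unset Printing Implicit Defensive.
Import Order.TTheory GRing.Theory Num.Theory.
Local Open Scope ring_scope.
Local Open Scope classical_set_scope.

Section Defs.
Variable R : realType.

Definition lpnorm (p : \bar R) (x : nat -> R) : \bar R :=
  Lnorm (@counting nat R) p (fun k => (x k)%:E).

(** embedding R^m -> l^p, i.e. multiplication by I_{oo,m}
    (column vectors padded with zeros) *)
Definition Iinf (m : nat) (x : 'cV[R]_m) : nat -> R :=
  fun k => match (insub k : option 'I_m) with
           | Some i => x i ord0 | None => 0 end.

Definition Imx (m' m : nat) : 'M[R]_(m', m) :=
  \matrix_(i < m', j < m) ((nat_of_ord i == nat_of_ord j)%:R).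

Definition opnorm (p : \bar R) (m : nat) (S : 'cV[R]_m -> nat -> R) : \bar R :=
  ereal_sup [set lpnorm p (S x) | x in [set x | (lpnorm p (Iinf x) <= 1)%E]].

Definition mxnorm (p : \bar R) (m' m : nat) (A : 'M[R]_(m', m)) : \bar R :=
  opnorm p (fun x => Iinf (A *m x)).

Definition dimseq (d : nat) (ms : nat -> nat) (n : nat) : nat :=
  if n is k.+1 then ms k else d.

(** W_n W_(n-1) ... W_1, where W k : 'M_(m_(k+1), m_k) stands for W_(k+1) *)
Fixpoint prodW (d : nat) (ms : nat -> nat)
  (W : forall k, 'M[R]_(dimseq d ms k.+1, dimseq d ms k)) (n : nat)
  : 'M[R]_(dimseq d ms n, d) :=
  match n with
  | 0 => 1%:M
  | k.+1 => W k *m prodW W k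
  end.

End Defs.

(* Main.v *)
Require Import Defs.
From HB Require Import structures.
From mathcomp Require Import all_boot all_order all_algebra.
From mathcomp Require Import all_classical all_reals all_analysis.
From mathcomp Require Import measurable_realfun ess_sup_inf.
From mathcomp Require Import lra.
Import Order.TTheory GRing.Theory Num.Theory.
Import numFieldNormedType.Exports.
Local Open Scope ring_scope.
Local Open Scope classical_set_scope.

Section L.
Variable R : realType.

Lemma counting1 (x : nat) : @counting nat R [set x] = 1%E.
Proof.
rewrite /counting asboolT; last exact: finite_set1.
by rewrite fset_set1 finmap.cardfs1.
Qed.

Lemma ae_count (P : nat -> Prop) :
  (\forall x \ae (@counting nat R), P x) -> forall x, P x.
Proof.
move=> [A [mA cA sA]] x; apply: contrapT => Px.
have : (@counting nat R [set x] <= counting A)%E.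
  apply: (le_measure counting); rewrite ?inE //.
  by move=> y -> ; apply: sA.
by rewrite counting1 cA lee_fin ler10.
Qed.

Lemma countingT_gt0 : (0 < @counting nat R setT)%E.
Proof.
apply: (@lt_le_trans _ _ 1%E) => //.
rewrite -(counting1 0); apply: (le_measure counting); rewrite ?inE //.
Qed.

Lemma lpnorm_fin (r : R) (f : nat -> R) : 0 < r ->
  lpnorm r%:E f = ((\sum_(k <oo) ((`|f k| `^ r)%:E)) `^ r^-1)%E.
Proof.
move=> r0; rewrite /lpnorm Lnorm_counting //.
Qed.

Lemma lpnorm_oo (f : nat -> R) :
  lpnorm +oo%E f = ess_sup counting (fun k => (`|f k|)%:E).
Proof.
by rewrite /lpnorm unlock /Lnorm countingT_gt0.
Qed.

Lemma lpnorm_ooP (f : nat -> R) (y : \bar R) :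
  (lpnorm +oo%E f <= y)%E <-> (forall k, (`|f k|%:E <= y)%E).
Proof.
rewrite lpnorm_oo; split.
  move=> /ess_supP H; exact: ae_count H.
by move=> H; apply/ess_supP; apply: nearW.
Qed.


Variable p : \bar R.
Hypothesis p1 : (1 <= p)%E.
Local Notation N := (lpnorm p).

Lemma lpD (f g : nat -> R) : (N (fun k => (f k + g k)%R) <= N f + N g)%E.
Proof. exact: (@eminkowski _ _ _ counting f g p). Qed.

Lemma lpZ (a : R) (f : nat -> R) : N (fun k => a * f k) = (`|a|%:E * N f)%E.
Proof.
case: p p1 => [r r1|_|//].
  rewrite lee_fin in r1.
  have r0 : 0 < r by apply: lt_le_trans r1.
  rewrite !lpnorm_fin //.
  under eq_eseriesr => k _ do rewrite normrM powRM // EFinM.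
  rewrite nneseriesZl; last by move=> i _; rewrite lee_fin powR_ge0.
  rewrite poweRM ?lee_fin ?powR_ge0 //; last first.
    by apply: nneseries_ge0 => i _ _; rewrite lee_fin powR_ge0 //.
  by rewrite poweR_EFin -powRrM mulfV ?gt_eqF // powRr1.
rewrite !lpnorm_oo -ess_supZl //; last exact: countingT_gt0.
by congr ess_sup; apply/funext => k /=; rewrite normrM EFinM.
Qed.

Lemma lp_mono (f g : nat -> R) : (forall k, `|f k| <= `|g k|) -> (N f <= N g)%E.
Proof.
move=> fg.
case: p p1 => [r r1|_|//].
  rewrite lee_fin in r1.
  have r0 : 0 < r by apply: lt_le_trans r1.
  rewrite !lpnorm_fin //.
  apply: gt0_ler_poweR; first by rewrite invr_ge0 ltW.
  - rewrite in_itv /= leey andbT; apply: nneseries_ge0 => i _ _; rewrite lee_fin powR_ge0 //.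
  - rewrite in_itv /= leey andbT; apply: nneseries_ge0 => i _ _; rewrite lee_fin powR_ge0 //.
  apply: lee_nneseries => [i _ _|n _]; rewrite lee_fin ?powR_ge0 //.
  by apply: (ge0_ler_powR (ltW r0)); rewrite ?nnegrE ?normr_ge0.
apply/lpnorm_ooP => k; apply: le_trans (_ : `|g k|%:E <= _)%E; first by rewrite lee_fin.
by move: k; apply/lpnorm_ooP.
Qed.

Definition delta (i : nat) : nat -> R := fun k => (k == i)%:R.

Lemma lp_delta i : N (delta i) = 1%E.
Proof.
case: p p1 => [r r1|_|//].
  rewrite lee_fin in r1.
  have r0 : 0 < r by apply: lt_le_trans r1.
  rewrite !lpnorm_fin //.
  rewrite (nneseries_split 0 i.+1); last by move=> k _; rewrite lee_fin powR_ge0.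
  rewrite add0n eseries0; last first.
    move=> k ik _; rewrite /delta; case: eqP => [ki|_]; last by rewrite normr0 powR0 ?gt_eqF.
    by move: ik; rewrite ki ltnn.
  rewrite adde0 big_nat_recr //= big1_seq; last first.
    move=> k /andP[_]; rewrite mem_iota add0n subn0 => /andP[_ ki].
    by rewrite /delta (ltn_eqF ki) normr0 powR0 ?gt_eqF.
  by rewrite add0e /delta eqxx normr1 powR1 poweR_EFin powR1.
apply/eqP; rewrite eq_le; apply/andP; split.
  apply/lpnorm_ooP => k; rewrite /delta lee_fin; case: eqP => _; rewrite ?normr1 ?normr0 //.
have := (iffLR (lpnorm_ooP (delta i) (lpnorm +oo%E (delta i)))) (lexx _) i.
by rewrite /delta eqxx normr1.
Qed.


Lemma lp_ge0 f : (0 <= N f)%E.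
Proof. exact: Lnorm_ge0. Qed.

Lemma lp_ext f g : f =1 g -> N f = N g.
Proof. by move=> fg; congr lpnorm; apply/funext. Qed.

Lemma lp0 : N (fun _ => 0) = 0%E.
Proof.
rewrite (@lp_ext _ (fun k => 0 * delta 0 k)); last by move=> k; rewrite mul0r.
by rewrite lpZ normr0 mul0e.
Qed.

Lemma lpN f : N (fun k => - f k) = N f.
Proof.
rewrite (@lp_ext _ (fun k => -1 * f k)); last by move=> k; rewrite mulN1r.
by rewrite lpZ normrN normr1 mul1e.
Qed.

Lemma lp_coord f i : (`|f i|%:E <= N f)%E.
Proof.
have := @lp_mono (fun k => f i * delta i k) f.
rewrite lpZ lp_delta mule1; apply => k.
rewrite /delta; case: eqP => [->|_]; first by rewrite mulr1.
by rewrite mulr0 normr0.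
Qed.

Lemma lp_supp (K : nat) f : (forall k, (K <= k)%N -> f k = 0) ->
  (N f <= (\sum_(k < K) `|f k|)%:E)%E.
Proof.
elim: K f => [|K IH] f fK.
  by rewrite big_ord0 (@lp_ext _ (fun _ => 0)) ?lp0 // => k; apply: fK.
pose g k := if k == K then 0 else f k.
rewrite (@lp_ext _ (fun k => g k + f K * delta K k)); last first.
  move=> k; rewrite /g /delta; case: eqP => [->|_]; first by rewrite add0r mulr1.
  by rewrite mulr0 addr0.
apply: le_trans (lpD _ _) _.
rewrite lpZ lp_delta mule1 big_ord_recr /= EFinD; apply: leeD => //.
have -> : \sum_(i < K) `|f i| = \sum_(i < K) `|g i|.
  by apply: eq_bigr => i _; rewrite /g (ltn_eqF (ltn_ord i)).
apply: IH => k Kk; rewrite /g; case: eqP => // kK.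
by apply: fK; rewrite ltn_neqAle Kk andbT; apply/eqP => e; apply: kK.
Qed.


Definition trunc (K : nat) (f : nat -> R) : nat -> R :=
  fun k => if (k < K)%N then f k else 0.

Lemma lp_trunc_le f (c : R) : (forall K, (N (trunc K f) <= c%:E)%E) ->
  (N f <= c%:E)%E.
Proof.
move=> H.
have c0 : 0 <= c.
  by rewrite -lee_fin; apply: le_trans (H 0%N); apply: lp_ge0.
case: p p1 H => [r r1 H|_ H|//]; last first.
  apply/lpnorm_ooP => k; apply: le_trans (H k.+1).
  have := iffLR (lpnorm_ooP _ _) (lexx (lpnorm +oo%E (trunc k.+1 f))) k.
  by rewrite /trunc ltnSn.
rewrite lee_fin in r1.
have r0 : 0 < r by apply: lt_le_trans r1.
have sK : forall K, (\sum_(0 <= k < K) ((`|f k| `^ r)%:E) <= c%:E `^ r)%E.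
  move=> K; have := H K; rewrite lpnorm_fin //.
  rewrite (nneseries_split 0 K); last by move=> k _; rewrite lee_fin powR_ge0.
  rewrite add0n eseries0; last first.
    move=> k Kk _; rewrite /trunc ltnNge Kk /= normr0 powR0 ?gt_eqF //.
  rewrite adde0.
  have -> : \sum_(0 <= k < K) (`|trunc K f k| `^ r)%:E =
            \sum_(0 <= k < K) (`|f k| `^ r)%:E.
    rewrite !big_nat; apply: eq_bigr => k /andP[_ kK].
    by rewrite /trunc kK.
  set s := \sum_(0 <= k < K) _ => hs.
  have s0 : (0 <= s)%E by apply: sume_ge0 => k _; rewrite lee_fin powR_ge0.
  rewrite -[s](@poweRe1 _ s) // -(@mulVf _ r) ?gt_eqF // poweRrM.
  apply: gt0_ler_poweR; first exact: ltW.
  - by rewrite in_itv /= leey andbT poweR_ge0.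
  - by rewrite in_itv /= leey andbT lee_fin.
  exact: hs.
rewrite lpnorm_fin //.
have hS : (\sum_(k <oo) ((`|f k| `^ r)%:E) <= c%:E `^ r)%E.
  apply: lime_le.
    by apply: is_cvg_nneseries => k _ _; rewrite lee_fin powR_ge0.
  by apply: nearW => K; apply: sK.
apply: le_trans (_ : (c%:E `^ r) `^ r^-1 <= _)%E.
  apply: gt0_ler_poweR; first by rewrite invr_ge0 ltW.
  - rewrite in_itv /= leey andbT; apply: nneseries_ge0 => i _ _; rewrite lee_fin powR_ge0 //.
  - by rewrite in_itv /= leey andbT lee_fin powR_ge0.
  exact: hS.
by rewrite -poweRrM mulfV ?gt_eqF // poweRe1 ?lee_fin.
Qed.


Lemma sum_cvg0 (fs : nat -> nat -> R) (f : nat -> R) K :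
  (forall k, fs n k @[n --> \oo] --> f k) ->
  \sum_(k < K) `|f k - fs n k| @[n --> \oo] --> 0.
Proof.
move=> Hc; elim: K => [|K IH].
  under eq_fun do rewrite big_ord0; exact: cvg_cst.
under eq_fun do rewrite big_ord_recr /=.
have h2 : (fun n => `|f K - fs n K|) @ \oo --> 0.
  have : (fun n => f K - fs n K) @ \oo --> f K - f K.
    by apply: cvgB => //; exact: cvg_cst.
  rewrite subrr => /cvg_norm; by rewrite normr0.
by have := cvgD IH h2; rewrite addr0; apply.
Qed.

Lemma lp_fatou (fs : nat -> nat -> R) (f : nat -> R) (c : R) :
  (forall k, fs n k @[n --> \oo] --> f k) ->
  (forall n, (N (fs n) <= c%:E)%E) -> (N f <= c%:E)%E.
Proof.
move=> Hc Hb; apply: lp_trunc_le => K.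
have bfin : N (trunc K f) \is a fin_num.
  rewrite ge0_fin_numE ?lp_ge0 //; apply: le_lt_trans (@lp_supp K _ _) _.
    by move=> k Kk; rewrite /trunc ltnNge Kk.
  by rewrite ltry.
rewrite -(fineK bfin) lee_fin.
apply: (@cvgr_to_ge _ \oo _ _ (fun n => c + \sum_(k < K) `|f k - fs n k|)).
  by have := @cvgD _ _ _ \oo _ _ _ _ _ (cvg_cst c) (@sum_cvg0 _ _ K Hc); rewrite addr0; apply.
apply: nearW => n; rewrite -lee_fin (fineK bfin) EFinD.
rewrite (@lp_ext _ (fun k => trunc K (fs n) k + (trunc K f k - trunc K (fs n) k))); last first.
  by move=> k; rewrite addrC subrK.
apply: le_trans (lpD _ _) _; apply: leeD.
  apply: le_trans (Hb n); apply: lp_mono => k.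
  by rewrite /trunc; case: ifP; rewrite ?normr0.
apply: le_trans (@lp_supp K _ _) _.
  by move=> k Kk; rewrite /trunc ltnNge Kk /= subrr.
rewrite lee_fin; apply: ler_sum => k _.
by rewrite /trunc ltn_ord.
Qed.


Lemma lp_abs (w : nat -> nat -> R) (r : nat -> R) (K : R) :
  (forall j, 0 <= r j) -> cvgn (fun n => \sum_(j < n) r j) -> 0 <= K ->
  (forall j, (N (fun k => (w j k - w j.+1 k)%R) <= (K * r j)%:E)%E) ->
  exists L : nat -> R, (forall k, w n k @[n --> \oo] --> L k) /\
     forall n, (N (fun k => (w n k - L k)%R) <=
       (K * (limn (fun n => \sum_(j < n) r j) - \sum_(j < n) r j))%:E)%E.
Proof.
move=> r0 hrho K0 hw.
set rho := fun n => \sum_(j < n) r j.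
have rhoS n : rho n.+1 = rho n + r n by rewrite /rho big_ord_recr.
have rho_mono : {homo rho : n m / (n <= m)%N >-> n <= m}.
  by apply/nondecreasing_seqP => n; rewrite rhoS lerDl.
have rho_le n : rho n <= limn rho by apply: nondecreasing_cvgn_le.
have tele n m : (N (fun k => (w n k - w (n + m)%N k)%R) <= (K * (rho (n + m)%N - rho n))%:E)%E.
  elim: m => [|m IH].
    rewrite addn0 subrr mulr0 (@lp_ext _ (fun _ => 0)) ?lp0 // => k.
    by rewrite subrr.
  rewrite (@lp_ext _ (fun k => (w n k - w (n + m)%N k) + (w (n + m)%N k - w (n + m).+1 k))); last first.
    by move=> k; rewrite addnS addrA subrK.
  apply: le_trans (lpD _ _) _.
  rewrite addnS rhoS addrAC.
  by rewrite mulrDr EFinD; apply: leeD => //; apply: hw.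
have coord n m k : `|w n k - w (n + m)%N k| <= K * (rho (n + m)%N - rho n).
  by rewrite -lee_fin; apply: le_trans (lp_coord (fun k => w n k - w (n + m)%N k) k) (tele n m).
have cvw k : cvgn (fun n => w n k).
  set u := fun n => w n k + K * rho n.
  have umono : {homo u : n m / (n <= m)%N >-> n <= m}.
    apply/nondecreasing_seqP => n; rewrite /u rhoS mulrDr.
    have := coord n 1%N k; rewrite addn1 rhoS addrAC subrr add0r => h.
    have := ler_norm (w n k - w n.+1 k); lra.
  have ub : has_ubound (range u).
    exists (w 0%N k + K * limn rho + K * limn rho) => _ [n _ <-].
    rewrite /u; apply: lerD; last by apply: ler_wpM2l.
    have := coord 0%N n k; rewrite add0n => h.
    have : K * (rho n - rho 0%N) <= K * limn rho.
      apply: ler_wpM2l => //; rewrite /rho big_ord0 subr0; exact: rho_le.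
    have := ler_norm (w n k - w 0%N k); rewrite distrC; lra.
  have cu : cvgn u by apply: nondecreasing_is_cvgn.
  have -> : (fun n => w n k) = (fun n => u n - K * rho n).
    by apply/funext => n; rewrite /u addrK.
  by apply: is_cvgB => //; apply: is_cvgMr.
exists (fun k => limn (fun n => w n k)); split => [k|n]; first exact: (cvw k).
apply: (@lp_fatou (fun m k => w n k - w (n + m)%N k)).
  move=> k; apply: cvgB; first exact: cvg_cst.
  have E : (fun m => w (n + m)%N k) = (fun m => w (m + n)%N k).
    by apply/funext => m; rewrite addnC.
  rewrite E (cvg_shiftn n (fun m => w m k)); exact: cvw k.
move=> m; apply: le_trans (tele n m) _; rewrite lee_fin; apply: ler_wpM2l => //.
by rewrite lerD2r.
Qed.


Lemma IinfD m (x y : 'cV[R]_m) k : Iinf (x + y) k = Iinf x k + Iinf y k.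
Proof. by rewrite /Iinf; case: insubP => [i _ _|_]; rewrite ?mxE ?addr0. Qed.

Lemma IinfZ m (a : R) (x : 'cV[R]_m) k : Iinf (a *: x) k = a * Iinf x k.
Proof. by rewrite /Iinf; case: insubP => [i _ _|_]; rewrite ?mxE ?mulr0. Qed.

Lemma Iinf0 m k : Iinf (0 : 'cV[R]_m) k = 0.
Proof. by rewrite /Iinf; case: insubP => [i _ _|_]; rewrite ?mxE. Qed.

Lemma Iinf_ord m (x : 'cV[R]_m) (i : 'I_m) : Iinf x i = x i ord0.
Proof. by rewrite /Iinf insubT //= => Hi; congr (x _ _); apply: val_inj. Qed.

Lemma Iinf_ge m (x : 'cV[R]_m) k : (m <= k)%N -> Iinf x k = 0.
Proof. by move=> mk; rewrite /Iinf insubF // ltnNge mk. Qed.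

Lemma Imx_mul m' m (y : 'cV[R]_m) (i : 'I_m') : (Imx R m' m *m y) i ord0 = Iinf y i.
Proof.
rewrite mxE /Iinf; case: insubP => [j _ ji|].
  rewrite (bigD1 j) //= mxE ji eqxx mul1r big1 ?addr0 // => j' jj'.
  rewrite mxE ; case: eqP => [e|_]; last by rewrite mul0r.
  by case/eqP: jj'; apply: val_inj; rewrite /= -e ji.
rewrite -leqNgt => mi; rewrite big1 // => j _; rewrite mxE; case: eqP => [e|_]; last by rewrite mul0r.
by move: (ltn_ord j); rewrite -e ltnNge mi.
Qed.

Lemma Iinf_Imx m' m (y : 'cV[R]_m) k :
  Iinf (Imx R m' m *m y) k = if (k < m')%N then Iinf y k else 0.
Proof.
case: ltnP => km; last exact: Iinf_ge.
by rewrite -[k]/(nat_of_ord (Ordinal km)) Iinf_ord Imx_mul.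
Qed.

Lemma Iinf_Imx_le m' m (y : 'cV[R]_m) k :
  `|Iinf (Imx R m' m *m y) k| <= `|Iinf y k|.
Proof. by rewrite Iinf_Imx; case: ifP; rewrite ?normr0. Qed.

Lemma Iinf_Imx_eq m' m (y : 'cV[R]_m) k : (m <= m')%N ->
  Iinf (Imx R m' m *m y) k = Iinf y k.
Proof.
move=> mm; rewrite Iinf_Imx; case: ltnP => // km.
by rewrite Iinf_ge // (leq_trans mm km).
Qed.

Lemma lp_Iinf_fin m (x : 'cV[R]_m) : (N (Iinf x) < +oo)%E.
Proof.
apply: le_lt_trans (@lp_supp m _ _) _; last by rewrite ltry.
by move=> k; apply: Iinf_ge.
Qed.

Lemma lp_Iinf_fin_num m (x : 'cV[R]_m) : N (Iinf x) \is a fin_num.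
Proof. by rewrite ge0_fin_numE ?lp_ge0 ?lp_Iinf_fin. Qed.

Lemma lp_Iinf_eq0 m (x : 'cV[R]_m) : N (Iinf x) = 0%E -> x = 0.
Proof.
move=> H; apply/matrixP => i j; rewrite (ord1 j) mxE.
have := lp_coord (Iinf x) i; rewrite H Iinf_ord lee_fin => h.
by apply/eqP; rewrite -normr_eq0 eq_le h normr_ge0.
Qed.


Lemma mxnorm_ge0 m' m (A : 'M[R]_(m', m)) : (0 <= mxnorm p A)%E.
Proof.
apply: le_trans (_ : N (Iinf (A *m 0)) <= _)%E; first exact: lp_ge0.
apply: ereal_sup_ubound; exists 0 => //=.
by rewrite (@lp_ext _ (fun _ => 0)) ?lp0 // => k; rewrite Iinf0.
Qed.

Lemma mx_bound m' m (A : 'M[R]_(m', m)) y : mxnorm p A \is a fin_num ->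
  (N (Iinf (A *m y)) <= (fine (mxnorm p A) * fine (N (Iinf y)))%:E)%E.
Proof.
move=> hA; set t := fine (N (Iinf y)).
have tE : N (Iinf y) = t%:E by rewrite fineK ?lp_Iinf_fin_num.
have t0 : 0 <= t by apply: fine_ge0; apply: lp_ge0.
have [t0'|tn0] := eqVneq t 0.
  have y0 : y = 0 by apply: lp_Iinf_eq0; rewrite tE t0'.
  rewrite y0 mulmx0 t0' mulr0 (@lp_ext _ (fun _ => 0)) ?lp0 // => k.
  by rewrite Iinf0.
have key : (N (Iinf (A *m (t^-1 *: y))) <= mxnorm p A)%E.
  apply: ereal_sup_ubound; exists (t^-1 *: y) => //=.
  rewrite (@lp_ext _ (fun k => t^-1 * Iinf y k)); last by move=> k; rewrite IinfZ.
  by rewrite lpZ tE -EFinM ger0_norm ?invr_ge0 // mulVf.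
rewrite -scalemxAr (@lp_ext _ (fun k => t^-1 * Iinf (A *m y) k)) in key; last first.
  by move=> k; rewrite IinfZ.
rewrite lpZ ger0_norm ?invr_ge0 // in key.
have bfin := @lp_Iinf_fin_num _ (A *m y).
move: key; rewrite -(fineK bfin) -(fineK hA) -EFinM !lee_fin => key.
have := ler_wpM2l t0 key; rewrite mulrA mulfV // mul1r mulrC.
by rewrite fineK.
Qed.


Lemma main (d : nat) (ms : nat -> nat)
  (W P : forall k, 'M[R]_(dimseq d ms k.+1, dimseq d ms k)) :
  (forall k, (ms k <= ms k.+1)%N) ->
  (forall k, W k = Imx R _ _ + P k) ->
  (\sum_(0 <= k <oo) mxnorm p (P k) < +oo)%E ->
  exists T : 'cV[R]_d -> nat -> R,
    [/\ (forall (a : R) x y k, T (a *: x + y) k = a * T x k + T y k),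
        (forall x, lpnorm p (T x) < +oo)%E &
        (fun n => opnorm p (fun x k => Iinf (prodW W n *m x) k - T x k))
          @ \oo --> 0%E].
Proof.
move=> hms hW hsum.
set Q := fun k => fine (mxnorm p (P k)).
have Pge0 k := @mxnorm_ge0 _ _ (P k).
have partial_le n : (\sum_(0 <= k < n) mxnorm p (P k) <=
    \sum_(0 <= k <oo) mxnorm p (P k))%E.
  by apply: nneseries_lim_ge => i _ _.
have Pfin k : mxnorm p (P k) \is a fin_num.
  rewrite ge0_fin_numE //; apply: le_lt_trans hsum.
  apply: le_trans (partial_le k.+1); rewrite big_nat_recr //=.
  apply: lee_paddl; last exact: lexx.
  by apply: sume_ge0 => i _; apply: Pge0.
have Q0 k : 0 <= Q k by apply: fine_ge0.
have sfin : (\sum_(0 <= k <oo) mxnorm p (P k))%E \is a fin_num.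
  by rewrite ge0_fin_numE // nneseries_ge0.
set S := fine (\sum_(0 <= k <oo) mxnorm p (P k))%E.
have Qsum n : \sum_(k < n) Q k <= S.
  rewrite -lee_fin /S fineK // -sumEFin.
  apply: le_trans (partial_le n); rewrite big_mkord.
  by apply: lee_sum => i _; rewrite /Q fineK.
have grow n x : (N (Iinf (prodW W n *m x)) <=
    (expR (\sum_(k < n) Q k) * fine (N (Iinf x)))%:E)%E.
  elim: n => [|n IH].
    by rewrite /= mul1mx big_ord0 expR0 mul1r fineK // lp_Iinf_fin_num.
  rewrite /= -mulmxA hW mulmxDl.
  set y := prodW W n *m x.
  rewrite (@lp_ext _ (fun k => Iinf (Imx R (dimseq d ms n.+1) (dimseq d ms n) *m y) k + Iinf (P n *m y) k)); last first.
    by move=> k; rewrite IinfD.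
  apply: le_trans (lpD _ _) _.
  have h1 : (N (Iinf (Imx R (dimseq d ms n.+1) (dimseq d ms n) *m y)) <= N (Iinf y))%E.
    by apply: lp_mono => k; apply: Iinf_Imx_le.
  have h2 := @mx_bound _ _ (P n) y (Pfin n).
  move: IH h1 h2; rewrite -/y -/(Q n).
  rewrite -(fineK (@lp_Iinf_fin_num _ (Imx R (dimseq d ms n.+1) (dimseq d ms n) *m y))) -(fineK (@lp_Iinf_fin_num _ y)).
  rewrite -(fineK (@lp_Iinf_fin_num _ (P n *m y))) !lee_fin => IH h1 h2.
  move: h2 => /= h2; rewrite big_ord_recr /= expRD.
  have e1 := expR_ge1Dx (Q n).
  have b0 : 0 <= fine (N (Iinf y)) by apply: fine_ge0; apply: lp_ge0.
  have c0 : 0 <= fine (N (Iinf x)) by apply: fine_ge0; apply: lp_ge0.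
  have E0 : 0 <= expR (\sum_(k < n) Q k) by apply: expR_ge0.
  have := Q0 n; nra.
set rr := fun j => Q j.+1.
have rr0 j : 0 <= rr j by apply: Q0.
set rho := fun n => \sum_(j < n) rr j.
have rho_cvg : cvgn rho.
  apply: nondecreasing_is_cvgn.
    by apply/nondecreasing_seqP => n; rewrite /rho big_ord_recr /= lerDl.
  exists S => _ [n _ <-]; apply: le_trans (Qsum n.+1); rewrite big_ord_recl /=.
  have -> : rho n = \sum_(i < n) Q (lift ord0 i).
    by apply: eq_bigr => i _; rewrite lift0.
  by rewrite lerDr.
have rho_le n : rho n <= limn rho.
  apply: nondecreasing_cvgn_le => //.
  by apply/nondecreasing_seqP => m; rewrite /rho big_ord_recr /= lerDl.
set M := expR S.
have M0 : 0 <= M by apply: expR_ge0.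
set T := fun (x : 'cV[R]_d) k => limn (fun n => Iinf (prodW W n.+1 *m x) k).
have hT x : (forall k, Iinf (prodW W n.+1 *m x) k @[n --> \oo] --> T x k) /\
    forall n, (N (fun k => (Iinf (prodW W n.+1 *m x) k - T x k)%R) <=
      (M * fine (N (Iinf x)) * (limn rho - rho n))%:E)%E.
  have c0 : 0 <= fine (N (Iinf x)) by apply: fine_ge0; apply: lp_ge0.
  have [L [HL HB]] : exists L : nat -> R,
      (forall k, Iinf (prodW W n.+1 *m x) k @[n --> \oo] --> L k) /\
      forall n, (N (fun k => (Iinf (prodW W n.+1 *m x) k - L k)%R) <=
        (M * fine (N (Iinf x)) * (limn rho - rho n))%:E)%E.
    apply: (@lp_abs (fun j k => Iinf (prodW W j.+1 *m x) k) rr) => //.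
      exact: mulr_ge0.
    move=> j.
    set y := prodW W j.+1 *m x.
    rewrite (@lp_ext _ (fun k => - Iinf (P j.+1 *m y) k)); last first.
      move=> k; rewrite [prodW W j.+2]/= -mulmxA hW mulmxDl IinfD -/y.
      by rewrite Iinf_Imx_eq ?opprD ?addrA ?subrr ?add0r //; apply: hms.
    rewrite lpN; apply: le_trans (@mx_bound _ _ (P j.+1) y (Pfin j.+1)) _.
    rewrite lee_fin -/(Q j.+1) -/(rr j).
    have := grow j.+1 x; rewrite -/y -(fineK (@lp_Iinf_fin_num _ y)) lee_fin => g.
    have eb : expR (\sum_(k < j.+1) Q k) <= M by rewrite ler_expR.
    have r0j := rr0 j.
    have rc : 0 <= rr j * fine (N (Iinf x)) by apply: mulr_ge0.
    rewrite /=; nra.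
  suff E : T x = L by rewrite E.
  apply/funext => k; rewrite /T; apply: cvg_lim; [exact: Rhausdorff|exact: HL].
exists T; split.
- move=> a x y k.
  have E : (fun n => Iinf (prodW W n.+1 *m (a *: x + y)) k) =
           (fun n => a * Iinf (prodW W n.+1 *m x) k + Iinf (prodW W n.+1 *m y) k).
    by apply/funext => n; rewrite mulmxDr -scalemxAr IinfD IinfZ.
  rewrite {1}/T E; apply: cvg_lim; first exact: Rhausdorff.
  apply: cvgD; last exact: (hT y).1.
  exact: cvgMr ((hT x).1 k).
- move=> x.
  set w0 := fun k => Iinf (prodW W 1 *m x) k.
  rewrite (@lp_ext _ (fun k => (w0 k + - (w0 k - T x k))%R)); last first.
    by move=> k; rewrite opprB addrC subrK.
  apply: le_lt_trans (lpD _ _) _; rewrite lpN.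
  apply: lte_add_pinfty; first exact: lp_Iinf_fin.
  by apply: le_lt_trans ((hT x).2 0%N) _; rewrite ltry.
rewrite -(@cvg_shiftS _ _ (nbhs (0 : \bar R))).
apply: (@squeeze_cvge _ \oo _ _ (fun=> 0%E) _ (fun n => (M * (limn rho - rho n))%:E)).
- apply: nearW => n; apply/andP; split.
    apply: le_trans (lp_ge0 (fun k => (Iinf (prodW W n.+1 *m 0) k - T 0 k)%R)) _.
    apply: ereal_sup_ubound; exists 0 => //=.
    by rewrite (@lp_ext _ (fun _ => 0)) ?lp0 // => k; rewrite Iinf0.
  apply: ge_ereal_sup => _ [x hx <-].
  apply: le_trans ((hT x).2 n) _; rewrite lee_fin.
  have c1 : fine (N (Iinf x)) <= 1.
    by rewrite -lee_fin fineK //; apply: lp_Iinf_fin_num.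
  have c0 : 0 <= fine (N (Iinf x)) by apply: fine_ge0; apply: lp_ge0.
  have t0 : 0 <= M * (limn rho - rho n) by apply: mulr_ge0 => //; rewrite subr_ge0.
  nra.
- exact: cvg_cst.
apply: cvg_EFin; first by apply: nearW.
have := @cvgMl_tmp _ _ _ _ _ M _ (cvgB (cvg_cst (limn rho)) rho_cvg).
by rewrite subrr mulr0; apply.
Qed.

End L.

Theorem corollary4p4 (R : realType) (p : \bar R) (d : nat) (ms : nat -> nat)
  (W P : forall k, 'M[R]_(dimseq d ms k.+1, dimseq d ms k)) :
  (1 <= p)%E ->
  (forall k, (0 < ms k)%N) ->
  (forall k, (ms k <= ms k.+1)%N) ->
  (forall k, W k = Imx R _ _ + P k) ->
  (\sum_(0 <= k <oo) mxnorm p (P k) < +oo)%E ->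
  exists T : 'cV[R]_d -> nat -> R,
    [/\ (forall (a : R) x y k, T (a *: x + y) k = a * T x k + T y k),
        (forall x, lpnorm p (T x) < +oo)%E &
        (fun n => opnorm p (fun x k => Iinf (prodW W n *m x) k - T x k))
          @ \oo --> 0%E].
Proof.
move=> p1 _ hms hW hsum.
exact: (@main R p p1 d ms W P hms hW hsum).
Qed.
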